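(* Let $(\Gamma,\mathfrak o,\mathfrak m,\mathfrak q)$ be a quantized Brauer graph and $A_\Gamma$ the associated Brauer graph algebra, and let $d\ge3$. Then $A_\Gamma$ is $d$-homogeneous if and only if $\Gamma$ is a star with $n$ edges for some $n\ge1$ such that $n$ divides $d-1$, the multiplicity of the central vertex is $\frac{d-1}{n}$ and all other multiplicities are $1$. In this case $A_\Gamma$ is isomorphic to the symmetric Nakayama algebra $KQ/I$, where $Q$ is an oriented cycle of length $n$ and $I$ is the ideal generated by all paths of length $d$.
   Context: Let $K$ be a field. A Brauer graph $(\Gamma,\mathfrak o,\mathfrak m)$ consists of a finite connected graph $\Gamma$ with at least one edge (loops and multiple edges allowed), a multiplicity function $\mathfrak m:\Gamma_0\to\mathbb Z_{>0}$ on the vertex set $\Gamma_0$, and, for each vertex $\alpha$, a cyclic ordering $\mathfrak o$ of the edges incident with $\alpha$ (a loop at $\alpha$ occurs twice in this cyclic ordering, the two occurrences being treated as distinct). The valency $\mathrm{val}(\alpha)$ is the number of edges incident with $\alpha$, loops counted twice. An edge $t$ is the successor of $s$ at $\alpha$ if $t$ directly follows $s$ in the cyclic ordering at $\alpha$ (if $\mathrm{val}(\alpha)=1$ the unique edge is its own successor). An edge $s$ is truncated at $\alpha$ if $\mathrm{val}(\alpha)=1$, $\mathfrak m(\alpha)=1$ and $s$ is the edge at $\alpha$; $s$ is a truncated edge if it is truncated at one of its endpoints. The successor sequence of $s$ at $\alpha$ is $s=s_0,s_1,\dots,s_{\mathrm{val}(\alpha)-1}$ with $s_{i+1}$ the successor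 of $s_i$ at $\alpha$. A quantizing function $\mathfrak q$ assigns $\mathfrak q_{s,\alpha}\in K\setminus\{0\}$ to each pair $(s,\alpha)$ with $s$ incident with $\alpha$ and $s$ not truncated at either endpoint; $(\Gamma,\mathfrak o,\mathfrak m,\mathfrak q)$ is a quantized Brauer graph. The Brauer graph algebra $A_\Gamma=KQ_\Gamma/I_\Gamma$ (paths written left to right) is: if $\Gamma=\mathbb A_2$ with both multiplicities $1$, $A_\Gamma=K[x]/(x^2)$. Otherwise $Q_\Gamma$ has a vertex $v_s$ for each edge $s$, and for each vertex $\alpha$ and each occurrence of $t$ as the successor of $s$ at $\alpha$ with $s$ not truncated at $\alpha$, an arrow $v_s\to v_t$. For $s$ at $\alpha$ not truncated at $\alpha$, with successor sequence $s_0,\dots,s_{v-1}$, $v=\mathrm{val}(\alpha)$, $s_v=s_0$, let $C_{s,\alpha}=a_0a_1\cdots a_{v-1}$, where $a_r$ is the arrow for $s_{r+1}$ succeeding $s_r$ at $\alpha$. $I_\Gamma$ is generated by: type one: for each edge $s$ with endpoints $\alpha,\beta$ not truncated at either, $\mathfrak q_{s,\alpha}C_{s,\alpha}^{\mathfrak m(\alpha)}-\mathfrak q_{s,\beta}C_{s,\beta}^{\mathfrak m(\beta)}$; type two: for each edge $s$ truncated at $\alpha$ with other endpoint $\beta$, writing $C_{s,\beta}=b_0b_1\cdots b_{\mathrm{val}(\beta)-1}$, the path $C_{s,\beta}^{\mathfrak m(\beta)}b_0$; type three: each path $ab$ of length $2$ in $Q_\Gamma$ that is not a subpath of any $C_{t,\gamma}$.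 A star with $n$ edges is a tree with one central vertex joined by $n$ edges to $n$ further vertices of valency $1$ (for $n=1$ it is $\mathbb A_2$, and the ''central vertex'' is either endpoint). For $d\ge2$, $KQ/I$ is $d$-homogeneous if $I$ has a minimal generating set consisting of homogeneous elements of length exactly $d$ (path-length grading). *)

(* Defs.v *)
From HB Require Import structures.
From mathcomp Require Import all_boot all_order all_algebra all_fingroup.
Set Implicit Arguments. Unset Strict Implicit. Unset Printing Implicit Defensive.
Import GRing.Theory.
Local Open Scope ring_scope.

Record quiver := Quiver {
  qV : finType;
  qA : finType;
  qs : qA -> qV;
  qt : qA -> qV
}.

(* A (candidate) path: start vertex and the list of arrows, read left to right. *)
Definition qpath (Q : quiver) := (qV Q * seq (qA Q))%type.

Fixpoint wfp (Q : quiver) (v : qV Q) (s : seq (qA Q)) : bool :=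
  match s with
  | [::] => true
  | a :: s' => (qs a == v) && wfp (qt a) s'
  end.

Definition tgtp (Q : quiver) (v : qV Q) (s : seq (qA Q)) : qV Q :=
  last v (map (@qt Q) s).

Section PathAlgebra.
Variables (K : fieldType) (Q : quiver).

(* Elements of KQ are coefficient functions on paths (finitely supported,
   supported on genuine paths: see [kfin]). *)
Definition kq := qpath Q -> K.

Definition kfin (f : kq) : Prop :=
  exists s : seq (qpath Q), forall r, f r != 0 -> (r \in s) && wfp r.1 r.2.

Definition pbasis (p : qpath Q) : kq := fun r => (r == p)%:R.
Definition kadd (f g : kq) : kq := fun r => f r + g r.
Definition ksub (f g : kq) : kq := fun r => f r - g r.
Definition kscale (c : K) (f : kq) : kq := fun r => c * f r.
Definition kone : kq := fun r => (r.2 == [::])%:R.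

(* Multiplication = concatenation of paths (written left to right). *)
Definition kmul (f g : kq) : kq := fun r =>
  if wfp r.1 r.2 then
    \sum_(i < (size r.2).+1)
        f (r.1, take i r.2) * g (tgtp r.1 (take i r.2), drop i r.2)
  else 0.

Definition in_ideal (G : kq -> Prop) (x : kq) : Prop :=
  exists n (u w : 'I_n -> qpath Q) (c : 'I_n -> K) (g : 'I_n -> kq),
    (forall i, G (g i)) /\
    forall r, x r = \sum_(i < n) c i * kmul (kmul (pbasis (u i)) (g i)) (pbasis (w i)) r.

Definition homogeneous (d : nat) (f : kq) : Prop :=
  forall r, f r != 0 -> size r.2 = d.

End PathAlgebra.

(* A presentation KQ/I, where I is the ideal generated by pG. *)
Record presentation (K : fieldType) := Pres {
  pQ : quiver;
  pG : kq K pQ -> Prop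
}.
Arguments pG {K} p _.

(* KQ/I is d-homogeneous: I has a minimal generating set consisting of
   homogeneous elements of length exactly d. *)
Definition d_homogeneous (K : fieldType) (P : presentation K) (d : nat) : Prop :=
  exists G : kq K (pQ P) -> Prop,
    (forall g, G g -> kfin g /\ homogeneous d g) /\
    (forall x, in_ideal G x <-> in_ideal (pG P) x) /\
    (forall g0, G g0 -> exists x, in_ideal G x /\
        ~ in_ideal (fun g => G g /\ ~ (g =1 g0)) x).

(* K-algebra isomorphism KQ1/I1 ~= KQ2/I2, expressed through a lift
   phi : KQ1 -> KQ2 inducing a bijective unital algebra map on quotients. *)
Definition alg_iso (K : fieldType) (P1 P2 : presentation K) : Prop :=
  exists phi : kq K (pQ P1) -> kq K (pQ P2),
    (forall x y, x =1 y -> phi x =1 phi y) /\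
    (forall x, kfin x -> kfin (phi x)) /\
    (forall c x y, kfin x -> kfin y ->
        phi (kadd (kscale c x) y) =1 kadd (kscale c (phi x)) (phi y)) /\
    (forall x y, kfin x -> kfin y ->
        in_ideal (pG P2) (ksub (phi (kmul x y)) (kmul (phi x) (phi y)))) /\
    in_ideal (pG P2) (ksub (phi (@kone K (pQ P1))) (@kone K (pQ P2))) /\
    (forall x, kfin x -> (in_ideal (pG P2) (phi x) <-> in_ideal (pG P1) x)) /\
    (forall y, kfin y -> exists x, kfin x /\ in_ideal (pG P2) (ksub (phi x) y)).

(* bH = occurrences of edges at vertices ("half-edges"); a loop has two.
   hv h = the vertex of the occurrence, he h = the edge.
   bsigma h = the occurrence directly following h in the cyclic ordering at hv h. *)
Record brauer_graph := BrauerGraph {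
  bV : finType;
  bE : finType;
  bH : finType;
  hv : bH -> bV;
  he : bH -> bE;
  bsigma : {perm bH};
  mult : bV -> nat
}.

Section BrauerGraphDefs.
Variable B : brauer_graph.

Definition valency (a : bV B) : nat := #|[pred h | hv h == a]|.

Definition adjacent : rel (bV B) := fun a b =>
  [exists h, exists h', [&& he h == he h', h != h', hv h == a & hv h' == b]].

Definition bg_valid : Prop :=
  (0 < #|bE B|)%N /\
  (forall e : bE B, #|[pred h : bH B | he h == e]| = 2%N) /\
  (forall h, hv (bsigma B h) = hv h) /\
  (forall h h', hv h = hv h' -> fconnect (bsigma B) h h') /\
  (forall a : bV B, (0 < mult a)%N) /\
  (forall a b, connect adjacent a b).

(* occurrence h is truncated (its edge is truncated at hv h) *)
Definition trunc (h : bH B) : bool :=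
  (valency (hv h) == 1%N) && (mult (hv h) == 1%N).

Definition etrunc (e : bE B) : bool := [exists h, (he h == e) && trunc h].

Definition special_A2 : bool :=
  [&& #|bV B| == 2%N, #|bE B| == 1%N & [forall a : bV B, mult a == 1%N]].

Definition quant_valid (K : fieldType) (q : bE B -> bV B -> K) : Prop :=
  forall h, ~~ etrunc (he h) -> q (he h) (hv h) != 0.

(* The quiver Q_Gamma: vertices = edges; arrows = non-truncated occurrences h,
   h being the arrow v_(he h) -> v_(he (sigma h)). *)
Definition arrowBG := {h : bH B | ~~ trunc h}.

Definition QBG : quiver :=
  @Quiver (bE B) arrowBG
    (fun a => he (val a)) (fun a => he (bsigma B (val a))).

(* successor sequence starting at h, repeated: first k arrows of C_h^infty *)
Definition cycseq (h : bH B) (k : nat) : seq (bH B) :=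
  [seq iter i (bsigma B) h | i <- iota 0 k].

Definition cycpow (h : bH B) : seq (bH B) :=
  cycseq h (mult (hv h) * valency (hv h)).

Section Rel.
Variable K : fieldType.

(* basis element of the path starting at v_e with arrows (given as occurrences) s *)
Definition pathel (e : bE B) (s : seq (bH B)) : kq K QBG :=
  fun r => ((r.1 == e) && (map val r.2 == s))%:R.

Definition subpath2 (a b : arrowBG) : bool :=
  [exists h, ~~ trunc h && infix [:: val a; val b] (cycpow h)].

Definition genBG (q : bE B -> bV B -> K) (x : kq K QBG) : Prop :=
  (exists h h', [/\ he h = he h', h <> h', ~~ etrunc (he h) &
     x =1 ksub (kscale (q (he h) (hv h)) (pathel (he h) (cycpow h)))
               (kscale (q (he h') (hv h')) (pathel (he h') (cycpow h')))]) \/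
  (exists h h', [/\ he h = he h', h <> h', trunc h &
     x =1 pathel (he h') (cycseq h' (mult (hv h') * valency (hv h') + 1))]) \/
  (exists a b : arrowBG, [/\ he (bsigma B (val a)) = he (val b), ~~ subpath2 a b &
     x =1 pathel (he (val a)) [:: val a; val b]]).

End Rel.

Definition is_star (n : nat) (c : bV B) : Prop :=
  #|bV B| = n.+1 /\ #|bE B| = n /\
  (forall e, exists h h', [/\ he h = e, he h' = e, hv h = c & hv h' <> c]) /\
  (forall a, a <> c -> valency a = 1%N).

End BrauerGraphDefs.

Definition loopQ : quiver :=
  @Quiver unit unit (fun _ => tt) (fun _ => tt).

Definition loop_pres (K : fieldType) : presentation K :=
  @Pres K loopQ (fun x => x =1 @pbasis K loopQ (tt, [:: tt; tt])).

Definition BGpres (K : fieldType) (B : brauer_graph) (q : bE B -> bV B -> K)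
  : presentation K :=
  if special_A2 B then loop_pres K else @Pres K (QBG B) (genBG q).

Definition cycQ (n : nat) : quiver :=
  @Quiver 'I_n 'I_n (fun i => i) (fun i => ordS i).

Definition nakayama (K : fieldType) (n d : nat) : presentation K :=
  @Pres K (cycQ n) (fun x => exists p : qpath (cycQ n),
     [/\ wfp p.1 p.2, size p.2 = d & x =1 @pbasis K (cycQ n) p]).

(* Main.v *)
Require Import Defs.
From HB Require Import structures.
From mathcomp Require Import all_boot all_order all_algebra all_fingroup.
From mathcomp Require Import zify.
From Stdlib Require Import FunctionalExtensionality.
Set Implicit Arguments. Unset Strict Implicit. Unset Printing Implicit Defensive.
Import GRing.Theory.

Module PartA.
Local Open Scope ring_scope.

Section Gen.
Variables (K : fieldType) (Q : quiver).
Implicit Types (f g : kq K Q) (r : qpath Q).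
Local Notation pb := (@pbasis K Q).

Lemma sum_neq0 (n : nat) (F : 'I_n -> K) : \sum_(i < n) F i != 0 -> exists i, F i != 0.
Proof.
move=> H; apply/existsP; apply: contraR H => /existsPn H.
by rewrite big1 // => i _; apply/eqP; move: (H i); rewrite negbK.
Qed.

Lemma kmul_unit_l f r : wfp r.1 r.2 -> kmul (pb (r.1, [::])) f r = f r.
Proof.
case: r => v s /= w; rewrite /kmul /= w big_ord_recl /= take0 drop0.
rewrite /pbasis eqxx mul1r big1 ?addr0 // => i _.
have : (0 < size (take (bump 0 i) s))%N.
  rewrite size_take; case: ifP => //; by case: (size s) i => [[]|].
by case: (take _ s) => //= a l _; rewrite xpair_eqE andbF mul0r.
Qed.

Lemma kmul_unit_r f r : wfp r.1 r.2 -> kmul f (pb (tgtp r.1 r.2, [::])) r = f r.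
Proof.
case: r => v s /= w; rewrite /kmul /= w big_ord_recr /= take_size drop_size.
rewrite /pbasis /tgtp eqxx mulr1 big1 ?add0r // => i _.
rewrite xpair_eqE.
have : (0 < size (drop i s))%N by rewrite size_drop subn_gt0 ltn_ord.
by case: (drop i s) => //= a l _; rewrite andbF mulr0.
Qed.

Lemma in_ideal_gen (G : kq K Q -> Prop) g r : G g -> wfp r.1 r.2 ->
  exists x, in_ideal G x /\ x r = g r.
Proof.
move=> Gg w.
exists (fun r' => \sum_(i < 1) 1 * kmul (kmul (pb (r.1, [::])) g)
                                  (pb (tgtp r.1 r.2, [::])) r').
split.
  exists 1%N, (fun _ => (r.1, [::])), (fun _ => (tgtp r.1 r.2, [::])), (fun _ => 1), (fun _ => g).
  by split.
by rewrite big_ord1 mul1r kmul_unit_r // kmul_unit_l.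
Qed.

Lemma ideal_support (G : kq K Q -> Prop) x r : in_ideal G x -> x r != 0 ->
  exists g j k, G g /\
    g (tgtp r.1 (take k (take j r.2)), drop k (take j r.2)) != 0.
Proof.
case=> n [u [w [c [gg [HG Hx]]]]]; rewrite Hx => /sum_neq0 [i].
rewrite mulf_eq0 negb_or => /andP [_].
rewrite {1}/kmul; case: ifP => _; last by rewrite eqxx.
move/sum_neq0 => [j]; rewrite mulf_eq0 negb_or => /andP [+ _].
rewrite /kmul /=; case: ifP => _; last by rewrite eqxx.
move/sum_neq0 => [k]; rewrite mulf_eq0 negb_or => /andP [_ H].
by exists (gg i), j, k; split.
Qed.

Lemma ideal_minlen (G : kq K Q -> Prop) (L : nat) x r :
  (forall g, G g -> forall r, g r != 0 -> (L <= size r.2)%N) ->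
  in_ideal G x -> x r != 0 -> (L <= size r.2)%N.
Proof.
move=> HG Hx Hr; have [g [j [k [Gg Hg]]]] := ideal_support Hx Hr.
apply: leq_trans (HG g Gg _ Hg) _ => /=.
by rewrite size_drop size_take; apply: leq_trans (leq_subr _ _) _; case: ifP => // /ltnW.
Qed.

Lemma ideal_point (G : kq K Q -> Prop) x r :
  (forall g, G g -> g r = 0 /\ forall r', g r' != 0 -> (size r.2 <= size r'.2)%N) ->
  in_ideal G x -> x r = 0.
Proof.
move=> HG Hx; apply/eqP; apply: contraT => Hr.
have [g [j [k [Gg Hg]]]] := ideal_support Hx Hr.
have [H0 Hs] := HG g Gg; have := Hs _ Hg => /=.
rewrite size_drop size_take.
case: (ltnP j (size r.2)) => Hj.
  by move=> H; have := leq_trans H (leq_subr _ _); rewrite leqNgt Hj.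
case: k Hg => [|k] Hg.
  by move: Hg; rewrite (take_oversize Hj) drop0 take0 /tgtp /= -surjective_pairing H0 eqxx.
case: r HG Hx Hr H0 Hs Hj Hg => v [|a s] /= HG Hx Hr H0 Hs Hj Hg. by move: Hg; rewrite /tgtp /= H0 eqxx. lia.
Qed.

End Gen.

End PartA.
Import PartA.

Module PartB.

Lemma card_fib (T R : finType) (f : T -> R) (P : pred T) :
  #|[pred x | P x]| = \sum_(y : R) #|[pred x | P x && (f x == y)]|.
Proof.
rewrite -sum1_card (partition_big f predT) //=; apply: eq_bigr => y _.
by rewrite -sum1_card; apply: eq_bigl => x.
Qed.

Section BG.
Variable B : brauer_graph.
Hypothesis Hedge : forall e : bE B, #|[pred h : bH B | he h == e]| = 2.
Hypothesis Hsig : forall h, hv (bsigma B h) = hv h.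
Local Notation sig := (bsigma B).

Lemma partner_ex (h : bH B) : exists h', he h' = he h /\ h' != h.
Proof.
have := cardD1 h [pred x : bH B | he x == he h]; rewrite Hedge inE eqxx.
move=> /esym /eqP; rewrite add1n eqSS => /card1P [h' Hh'].
have := Hh' h'; rewrite !inE eqxx => /andP [H1 /eqP H2]; by exists h'.
Qed.

Lemma partner_uniq (h h1 h2 : bH B) : he h1 = he h -> he h2 = he h ->
  h1 != h -> h2 != h -> h1 = h2.
Proof.
move=> E1 E2 N1 N2.
have := cardD1 h [pred x : bH B | he x == he h]; rewrite Hedge inE eqxx.
move=> /esym /eqP; rewrite add1n eqSS => /card1P [h' Hh'].
have := Hh' h1; have := Hh' h2; rewrite !inE N1 N2 E1 E2 eqxx /=.
by move=> /esym/eqP -> /esym/eqP ->.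
Qed.

Lemma fibre_two (h1 h2 h : bH B) : he h1 = he h2 -> h1 != h2 -> he h = he h1 ->
  h = h1 \/ h = h2.
Proof.
move=> E N Eh; case: (eqVneq h h1) => [->|N1]; first by left.
right; apply: (@partner_uniq h1) => //; by rewrite eq_sym.
Qed.

Lemma val1_uniq (a : bV B) (h1 h2 : bH B) : valency a = 1%N ->
  hv h1 = a -> hv h2 = a -> h1 = h2.
Proof.
move=> /eqP /card1P [x Hx] E1 E2.
have := Hx h1; have := Hx h2; rewrite !inE E1 E2 eqxx.
by move=> /esym/eqP -> /esym/eqP ->.
Qed.

Lemma card_H : #|bH B| = (2 * #|bE B|)%N.
Proof.
have -> : #|bH B| = #|[pred x : bH B | true]| by apply: eq_card.
rewrite (card_fib (@he B)) /=.
rewrite (eq_bigr (fun _ => 2%N)); last first.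
  by move=> e _; rewrite -(Hedge e).
by rewrite sum_nat_const mulnC; congr (_ * _)%N; apply: eq_card.
Qed.

Lemma sum_val : #|bH B| = (\sum_(a : bV B) valency a)%N.
Proof.
have -> : #|bH B| = #|[pred x : bH B | true]| by apply: eq_card.
by rewrite (card_fib (@hv B)).
Qed.

Variable c : bV B.
Hypothesis Hone : forall e : bE B, exists h, he h = e /\ hv h = c.
Hypothesis Huniq : forall h1 h2 : bH B, he h1 = he h2 -> hv h1 = c -> hv h2 = c -> h1 = h2.

Lemma val_c : valency c = #|bE B|.
Proof.
rewrite /valency.
rewrite (card_fib (@he B)) /=.
rewrite (eq_bigr (fun _ => 1%N)); last first.
  move=> e _; have [h [E1 E2]] := Hone e; apply: (@eq_card1 _ h) => x; rewrite !inE.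
  apply/idP/eqP => [/andP [/eqP X1 /eqP X2]|->]; last by rewrite E1 E2 !eqxx.
  by apply: Huniq => //; rewrite X2.
by rewrite sum_nat_const muln1; apply: eq_card.
Qed.

Lemma card_V : (forall a, a != c -> valency a = 1%N) -> #|bV B| = #|bE B|.+1.
Proof.
move=> Hv; have := sum_val; rewrite card_H (bigD1 c) //= val_c.
rewrite (eq_bigr (fun _ => 1%N)); last by move=> a /Hv.
rewrite sum1_card cardC1 => /eqP; rewrite mul2n -addnn eqn_add2l => /eqP ->.
have : (0 < #|bV B|)%N by apply/card_gt0P; exists c.
by case: #|bV B|.
Qed.
End BG.

End PartB.
Import PartB.

Module PartC.

Section Cyc.
Variable B : brauer_graph.
Local Notation sig := (bsigma B).

Lemma cyc_iota (h : bH B) m k :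
  map (fun i => iter i sig h) (iota m.+1 k) = map (fun i => iter i sig (sig h)) (iota m k).
Proof. by elim: k m => [|k IH] m //=; rewrite IH -iterSr. Qed.

Lemma cycseqS (h : bH B) k : cycseq h k.+1 = h :: cycseq (sig h) k.
Proof. by rewrite /cycseq /= cyc_iota. Qed.

Lemma size_cycseq (h : bH B) k : size (cycseq h k) = k.
Proof. by rewrite /cycseq size_map size_iota. Qed.

Hypothesis Hsig : forall h, hv (sig h) = hv h.

Lemma cycseq_hv (h : bH B) k x : x \in cycseq h k -> hv x = hv h.
Proof.
elim: k h => [|k IH] h //; rewrite cycseqS inE => /orP [/eqP -> //|/IH].
by rewrite Hsig.
Qed.

Lemma infix_cycseq (h x y : bH B) k : infix [:: x; y] (cycseq h k) -> y = sig x.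
Proof.
elim: k h => [|k IH] h //; rewrite cycseqS infix_consl => /orP [|/IH //].
case: k {IH} => [|k]; first by rewrite prefix_cons andbF.
by rewrite cycseqS !prefix_cons => /and3P [/eqP -> /eqP -> _].
Qed.

Lemma infix_cycseq2 (h : bH B) k : infix [:: h; sig h] (cycseq h k.+2).
Proof. by rewrite !cycseqS infix_consl !prefix_cons !eqxx /= prefix0s. Qed.

Definition lifta (s : seq (bH B)) : seq (arrowBG B) := pmap insub s.

Lemma map_val_lifta s : all (fun h => ~~ trunc h) s -> map val (lifta s) = s.
Proof.
elim: s => [|x s IH] //= /andP [Hx Hs].
rewrite /lifta /= (@insubT _ (fun h => ~~ trunc h) (arrowBG B) x Hx) /=. by rewrite -{2}(IH Hs).
Qed.

Lemma trunc_sig (h : bH B) : trunc (sig h) = trunc h.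
Proof. by rewrite /trunc Hsig. Qed.

Lemma all_cycseq (h : bH B) k : ~~ trunc h -> all (fun x => ~~ trunc x) (cycseq h k).
Proof.
move=> Hh; apply/allP => x /cycseq_hv E; by rewrite /trunc E.
Qed.

Lemma wfp_cyc (h : bH B) k : ~~ trunc h -> @wfp (QBG B) (he h) (lifta (cycseq h k)).
Proof.
elim: k h => [|k IH] h Hh //.
rewrite cycseqS /lifta /= (@insubT _ (fun h => ~~ trunc h) (arrowBG B) h Hh) /= eqxx /=.
by apply: IH; rewrite trunc_sig.
Qed.

Variable K : fieldType.
Local Open Scope ring_scope.

Lemma pathel_supp e s (r : qpath (QBG B)) : pathel K e s r != 0 ->
  r.1 = e /\ map val r.2 = s.
Proof.
rewrite /pathel; case: (r.1 =P e) => [E1|_]; last by rewrite andFb eqxx.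
by case: (_ =P s) => [E2|_]; last by rewrite andbF eqxx.
Qed.

Lemma pathel_at e s : all (fun h => ~~ trunc h) s -> pathel K e s (e, lifta s) = 1.
Proof. by move=> H; rewrite /pathel /= map_val_lifta // !eqxx. Qed.

Lemma pathel_pt e s (r : qpath (QBG B)) : all (fun h => ~~ trunc h) s ->
  pathel K e s r != 0 -> r = (e, lifta s).
Proof.
move=> H /pathel_supp [E1 E2]; case: r E1 E2 => a b /= -> E2; congr (_, _).
apply: (@inj_map _ _ val val_inj); by rewrite E2 map_val_lifta.
Qed.
End Cyc.

End PartC.
Import PartC.

Module PartD.

Definition tv (B : brauer_graph) (a : bV B) := (valency a == 1%N) && (mult a == 1%N).

Section Star.
Variable B : brauer_graph.
Local Notation sig := (bsigma B).
Hypothesis Hedge : forall e : bE B, #|[pred h : bH B | he h == e]| = 2.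
Hypothesis Hsig : forall h, hv (sig h) = hv h.
Variable c : bV B.
Hypothesis ntc : ~~ tv c.
Hypothesis Hone : forall e : bE B, exists h, he h = e /\ hv h = c.
Hypothesis Huniq : forall h1 h2 : bH B, he h1 = he h2 -> hv h1 = c -> hv h2 = c -> h1 = h2.
Hypothesis Hleaf : forall a, a != c -> tv a.
Hypothesis Hm2 : (2 <= mult c * valency c)%N.

Lemma trunc_iff (h : bH B) : trunc h = (hv h != c).
Proof.
rewrite /trunc; case: (eqVneq (hv h) c) => [->|/Hleaf]; first by apply/negbTE.
by [].
Qed.

Lemma arrow_c (a : arrowBG B) : hv (val a) = c.
Proof. by have := valP a; rewrite /= trunc_iff negbK => /eqP. Qed.

Lemma partner_c (h : bH B) : hv h != c -> exists h', he h' = he h /\ h' != h /\ hv h' = c.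
Proof.
move=> N; have [hc [E1 E2]] := Hone (he h); exists hc; split => //; split => //.
by apply/eqP => E; move: N; rewrite -E E2 eqxx.
Qed.

Lemma etrunc_all (e : bE B) : etrunc e.
Proof.
have [hc [E1 E2]] := Hone e; have [h [Eh Nh]] := partner_ex Hedge hc.
apply/existsP; exists h; rewrite Eh E1 eqxx /= trunc_iff.
by apply/eqP => E; move: Nh; rewrite (Huniq Eh E E2) eqxx.
Qed.

Lemma comp_sig (a b : arrowBG B) : he (sig (val a)) = he (val b) -> val b = sig (val a).
Proof. by move=> E; apply: Huniq; rewrite ?Hsig ?arrow_c. Qed.

Lemma subpath_all (a b : arrowBG B) : he (sig (val a)) = he (val b) -> subpath2 a b.
Proof.
move=> /comp_sig E; apply/existsP; exists (val a); rewrite (valP a) /= E /cycpow arrow_c.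
by case: (mult c * valency c)%N Hm2 => [|[|k]] // _; apply: infix_cycseq2.
Qed.

Variable K : fieldType.
Variable q : bE B -> bV B -> K.
Local Notation L := (mult c * valency c + 1)%N.

Lemma classify x : genBG q x ->
  exists h', hv h' = c /\ x =1 pathel K (he h') (cycseq h' L).
Proof.
case=> [[h [h' [_ _ /negP N _]]]|[[h [h' [E N T Hx]]]|[a [b [E N _]]]]].
- by case: N; apply: etrunc_all.
- exists h'; have Hc : hv h' = c.
    have [hc [E1 E2]] := Hone (he h).
    have [E3|E3] := fibre_two Hedge E (introN eqP N) E1; last by rewrite -E3.
    by move: T; rewrite trunc_iff -E3 E2 eqxx.
  by rewrite -Hc.
- by move: N; rewrite subpath_all.
Qed.

Lemma gen_ex h' : hv h' = c -> genBG q (pathel K (he h') (cycseq h' L)).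
Proof.
move=> Hc; have [h [Eh Nh]] := partner_ex Hedge h'.
right; left; exists h, h'; split => //; first by apply/eqP.
  by rewrite trunc_iff; apply/eqP => E; move: Nh; rewrite (Huniq Eh E Hc) eqxx.
by rewrite Hc.
Qed.

Lemma gen_pt x (r : qpath (QBG B)) : genBG q x -> x r != 0%R ->
  exists h', hv h' = c /\ r = (he h', lifta (cycseq h' L)).
Proof.
move=> /classify [h' [Hc Hx]]; rewrite Hx => H; exists h'; split => //.
apply: pathel_pt H; apply: all_cycseq => //; by rewrite trunc_iff Hc eqxx.
Qed.

Lemma gen_len x (r : qpath (QBG B)) : genBG q x -> x r != 0%R -> size r.2 = L.
Proof.
move=> Hg /(gen_pt Hg) [h' [Hc ->]] /=.
by rewrite -(size_map val) map_val_lifta ?size_cycseq // all_cycseq // trunc_iff Hc eqxx.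
Qed.
End Star.

End PartD.
Import PartD.

Module PartE.

Section Graph.
Variable B : brauer_graph.
Hypothesis Hedge : forall e : bE B, #|[pred h : bH B | he h == e]| = 2.
Hypothesis Hconn : forall a b : bV B, connect (@adjacent B) a b.

Lemma occ (e : bE B) : exists h, he h = e.
Proof.
have : (0 < #|[pred h : bH B | he h == e]|)%N by rewrite Hedge.
by move=> /card_gt0P [h]; rewrite inE => /eqP; exists h.
Qed.

Lemma closure (S : pred (bV B)) x0 : S x0 ->
  (forall x y, S x -> adjacent x y -> S y) -> forall a, S a.
Proof.
move=> S0 HS a; have /connectP [p Hp ->] := Hconn x0 a.
elim: p x0 S0 Hp => //= y p IH x Sx /andP [Hxy Hp]; exact: IH (HS _ _ Sx Hxy) Hp.
Qed.

Lemma adjP x y : adjacent x y -> exists h h' : bH B,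
  [/\ he h = he h', h != h', hv h = x & hv h' = y].
Proof.
move=> /existsP [h /existsP [h' /and4P [/eqP E N /eqP X /eqP Y]]].
by exists h, h'.
Qed.

Hypothesis HE0 : (0 < #|bE B|)%N.
Hypothesis Het : forall e : bE B, etrunc e.
Hypothesis Hns : ~~ special_A2 B.

Lemma exists_c : exists c : bV B, [/\ ~~ tv c,
  (forall e : bE B, exists h, he h = e /\ hv h = c),
  (forall h1 h2 : bH B, he h1 = he h2 -> hv h1 = c -> hv h2 = c -> h1 = h2) &
  (forall a, a != c -> tv a)].
Proof.
have [e0 _] := card_gt0P HE0.
have /existsP [h0 /andP [/eqP E0 T0]] := Het e0.
have [h0' [E0' N0]] := partner_ex Hedge h0.
case: (boolP (trunc h0')) => T'.
  exfalso; move/negP: Hns; apply.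
  set l := hv h0; set l' := hv h0'.
  have key : forall h, hv h = l \/ hv h = l' -> h = h0 \/ h = h0'.
    move=> h [E|E]; [left|right]; apply: val1_uniq E _ => //.
    - by case/andP: T0 => /eqP.
    - by case/andP: T' => /eqP.
  have Sall : forall a, (a == l) || (a == l').
    apply: (@closure _ l); first by rewrite eqxx.
    move=> x y /orP [/eqP Ex|/eqP Ex] /adjP [h [h' [E N Hx Hy]]].
    - have [Eh|Eh] := key h (or_introl (etrans Hx Ex)); subst h.
        have E' : h' = h0' by apply: (@partner_uniq _ Hedge h0); first [done | by rewrite E | by rewrite -E | by rewrite E0' | by rewrite -E0' | by rewrite eq_sym | by rewrite -E E0'].
        by rewrite -Hy E' eqxx orbT.
      have E' : h' = h0.
        apply: (@partner_uniq _ Hedge h0'); first [done | by rewrite E | by rewrite -E | by rewrite E0' | by rewrite -E0' | by rewrite eq_sym | by rewrite -E E0'].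
      by rewrite -Hy E' eqxx.
    - have [Eh|Eh] := key h (or_intror (etrans Hx Ex)); subst h.
        have E' : h' = h0' by apply: (@partner_uniq _ Hedge h0); first [done | by rewrite E | by rewrite -E | by rewrite E0' | by rewrite -E0' | by rewrite eq_sym | by rewrite -E E0'].
        by rewrite -Hy E' eqxx orbT.
      have E' : h' = h0.
        apply: (@partner_uniq _ Hedge h0'); first [done | by rewrite E | by rewrite -E | by rewrite E0' | by rewrite -E0' | by rewrite eq_sym | by rewrite -E E0'].
      by rewrite -Hy E' eqxx.
  have Nl : l != l'.
    apply/eqP => E; move/eqP: N0; apply; apply: (@val1_uniq _ l) => //.
    by case/andP: T0 => /eqP.
  apply/and3P; split.
  - have -> : #|bV B| = #|pred2 l l'| by apply: eq_card => a; rewrite !inE Sall.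
    by rewrite card2 Nl.
  - apply/eqP; apply: (@eq_card1 _ e0) => e; rewrite !inE.
    apply/idP/eqP => // _ .
    have [h Eh] := occ e; have /orP [/eqP X|/eqP X] := Sall (hv h).
      by have [Y|Y] := key h (or_introl X); rewrite -Eh Y ?E0' E0.
    by have [Y|Y] := key h (or_intror X); rewrite -Eh Y ?E0' E0.
  - apply/forallP => a; have /orP [/eqP ->|/eqP ->] := Sall a.
      by case/andP: T0.
    by case/andP: T'.
set c := hv h0'.
have ntc : ~~ tv c by [].
pose S a := (a == c) || [exists h : bH B, [&& hv h == a, tv a &
   [exists h' : bH B, [&& he h' == he h, h' != h & hv h' == c]]]].
have Sall : forall a, S a.
  apply: (@closure S c); first by rewrite /S eqxx.
  move=> x y /orP [/eqP Ex|/existsP [hx /and3P [/eqP Hx Tx /existsP [px /and3P [/eqP Ep Np /eqP Hp]]]]]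
     /adjP [h [h' [E N Hh Hh']]].
  - have /existsP [h3 /andP [/eqP E3 T3]] := Het (he h).
    have [X|X] := fibre_two Hedge E N E3; subst h3.
      by move: T3 ntc; rewrite /trunc /tv Hh Ex => ->.
    apply/orP; right; apply/existsP; exists h'; rewrite Hh' eqxx /=.
    have -> : tv y by rewrite -Hh'.
    rewrite /=.
    apply/existsP; exists h; rewrite E eqxx /= Hh Ex eqxx andbT. exact: N.
  - have Ehx : h = hx by apply: (@val1_uniq _ x) => //; case/andP: Tx => /eqP.
    subst hx; have Y : h' = px.
      apply: (@partner_uniq _ Hedge h); first [done | by rewrite E | by rewrite -E | by rewrite eq_sym].
    by rewrite /S -Hh' Y Hp eqxx.
have Hleaf : forall a, a != c -> tv a.
  move=> a Na; have /orP [Ea|/existsP [hx /and3P [_ Ta _]]] := Sall a => //.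
  by rewrite Ea in Na.
have Huniq : forall h1 h2 : bH B, he h1 = he h2 -> hv h1 = c -> hv h2 = c -> h1 = h2.
  move=> h1 h2 E H1 H2; apply/eqP; apply: contraT => N.
  have /existsP [h3 /andP [/eqP E3 T3]] := Het (he h1).
  have [X|X] := fibre_two Hedge E N E3; subst h3.
    by move: T3 ntc; rewrite /trunc /tv H1 => ->.
  by move: T3 ntc; rewrite /trunc /tv H2 => ->.
exists c; split => // e.
have [h Eh] := occ e; have [h' [Eh' Nh']] := partner_ex Hedge h.
case: (eqVneq (hv h) c) => Hc; first by exists h.
case: (eqVneq (hv h') c) => Hc'; first by exists h'; rewrite Eh'.
have /orP [Ea|/existsP [hx /and3P [/eqP Hx Tx /existsP [px /and3P [/eqP Ep Np /eqP Hp]]]]] := Sall (hv h).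
  by rewrite Ea in Hc.
have Ehx : hx = h by apply: (@val1_uniq _ (hv h)) => //; case/andP: Tx => /eqP.
subst hx; have Epx : px = h' by apply: (@partner_uniq _ Hedge h).
by rewrite -Epx Hp eqxx in Hc'.
Qed.
End Graph.

End PartE.
Import PartE.

Module PartF.

Section Fwd.
Variables (K : fieldType) (B : brauer_graph) (q : bE B -> bV B -> K) (d : nat).
Local Notation sig := (bsigma B).
Hypothesis Hval : bg_valid B.
Hypothesis Hd : (3 <= d)%N.
Variable G : kq K (QBG B) -> Prop.
Hypothesis HGd : forall g, G g -> kfin g /\ homogeneous d g.
Hypothesis HI : forall x, in_ideal G x <-> in_ideal (genBG q) x.

Lemma K1 x (r : qpath (QBG B)) : genBG q x -> wfp r.1 r.2 -> x r != 0%R -> (d <= size r.2)%N.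
Proof.
move=> Hx w Hr; have [y [Hy Hyr]] := in_ideal_gen Hx w.
apply: (@ideal_minlen _ _ G d y) => //; last by rewrite Hyr.
  by move=> g Gg r' Hg; have [_ Hh] := HGd Gg; rewrite (Hh _ Hg).
by apply/HI.
Qed.

Lemma no_type3 (a b : arrowBG B) : he (sig (val a)) = he (val b) -> subpath2 a b.
Proof.
move=> E; apply: contraT => N.
have Hg : genBG q (pathel K (he (val a)) [:: val a; val b]).
  by right; right; exists a, b; split.
have := @K1 _ (he (val a), [:: a; b]) Hg.
rewrite /= eqxx /= E eqxx /pathel /= !eqxx /= => /(_ isT (oner_neq0 _)).
by rewrite leqNgt (leq_trans _ Hd).
Qed.

Lemma all_etrunc (e : bE B) : etrunc e.
Proof.
case: Hval => [_ [Hedge [Hsig _]]].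
have [h Eh] := occ Hedge e; have [h' [E N]] := partner_ex Hedge h.
case: (boolP (trunc h)) => T; first by apply/existsP; exists h; rewrite Eh eqxx.
case: (boolP (trunc h')) => T'; first by apply/existsP; exists h'; rewrite E Eh eqxx.
exfalso.
set h1 := (sig^-1)%g h.
have Eh1 : sig h1 = h by rewrite /h1 permKV.
have T1 : ~~ trunc h1 by rewrite -(trunc_sig Hsig) Eh1.
have := @no_type3 (Sub h1 T1) (Sub h' T'); rewrite /= Eh1 E => /(_ erefl).
move=> /existsP [h'' /andP [_ /infix_cycseq]]; rewrite Eh1 => Y.
by move: N; rewrite -[h' in h' != _]/(val (Sub h' T' : arrowBG B)) Y eqxx.
Qed.

Lemma fwd : special_A2 B = false -> exists (n : nat) (c : bV B),
       [/\ (0 < n)%N, is_star n c, (n %| d.-1)%N, mult c = (d.-1 %/ n)%N &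
           forall a, a <> c -> mult a = 1%N].
Proof.
move=> Hns; case: Hval => [HE0 [Hedge [Hsig [_ [_ Hconn]]]]].
have [c [ntc Hone Huniq Hleaf]] := exists_c Hedge Hconn HE0 all_etrunc (negbT Hns).
set L := (mult c * valency c + 1)%N.
have [e0 _] := card_gt0P HE0.
have [hc [Ehc Hc]] := Hone e0.
have ntrc : ~~ trunc hc by rewrite (trunc_iff ntc Hleaf) Hc eqxx.
have Hg0 := @gen_ex B Hedge c ntc Huniq Hleaf K q hc Hc.
set r0 : qpath (QBG B) := (he hc, lifta (cycseq hc L)).
have w0 : wfp r0.1 r0.2 by apply: wfp_cyc.
have Hr0 : pathel K (he hc) (cycseq hc L) r0 = 1%R by apply: pathel_at; apply: all_cycseq.
have sz0 : size r0.2 = L.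
  by rewrite -(size_map val) map_val_lifta ?size_cycseq // all_cycseq.
have dL : (d <= L)%N by rewrite -sz0; apply: K1 Hg0 w0 _; rewrite Hr0 oner_neq0.
have Hm2 : (2 <= mult c * valency c)%N by move: dL; rewrite /L; lia.
have Ld : (L <= d)%N.
  have [y [Hy Hyr]] := in_ideal_gen Hg0 w0.
  have /HI HyG := Hy.
  have Hy0 : y r0 != 0%R by rewrite Hyr Hr0 oner_neq0.
  have [g [j [k [Gg Hgp]]]] := ideal_support HyG Hy0.
  set p := (_, _) in Hgp.
  have [[s Hs] Hh] := HGd Gg.
  have wp : wfp p.1 p.2 by case/andP: (Hs _ Hgp).
  have [z [Hz Hzp]] := in_ideal_gen Gg wp.
  have /HI HzB := Hz.
  rewrite -(Hh _ Hgp); apply: (ideal_minlen _ HzB); last by rewrite Hzp.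
  move=> g' Hg' r' Hr'.
  by rewrite (gen_len Hedge Hsig ntc Hone Huniq Hleaf Hm2 Hg' Hr').
have dE : d = L by apply/eqP; rewrite eqn_leq dL Ld.
have vc : valency c = #|bE B| by apply: val_c.
have HV : #|bV B| = #|bE B|.+1.
  apply: (card_V Hedge Hone Huniq) => a /Hleaf /andP [/eqP -> _] //.
exists #|bE B|, c; split => //.
- split => //; split => //; split.
    move=> e; have [h [Eh Hh]] := Hone e; have [h' [E N]] := partner_ex Hedge h.
    exists h, h'; split => //; first by rewrite E.
    by move=> Y; move: N; rewrite (Huniq _ _ E Y Hh) eqxx.
  by move=> a /eqP /Hleaf /andP [/eqP -> _].
- by rewrite dE /L addn1 /= vc dvdn_mull.
- by rewrite dE /L addn1 /= vc mulnK.
- by move=> a /eqP /Hleaf /andP [_ /eqP ->].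
Qed.
End Fwd.

End PartF.
Import PartF.

Module PartG.

Section Rev.
Variables (B : brauer_graph) (d n : nat) (c : bV B).
Hypothesis Hval : bg_valid B.
Hypothesis Hd : (3 <= d)%N.
Hypothesis Hn : (0 < n)%N.
Hypothesis Hst : is_star n c.
Hypothesis Hdiv : (n %| d.-1)%N.
Hypothesis Hmc : mult c = (d.-1 %/ n)%N.
Hypothesis Hma : forall a, a <> c -> mult a = 1%N.

Lemma star_facts :
  [/\ ~~ tv c,
      (forall e : bE B, exists h, he h = e /\ hv h = c),
      (forall h1 h2 : bH B, he h1 = he h2 -> hv h1 = c -> hv h2 = c -> h1 = h2),
      (forall a, a != c -> tv a) &
      (mult c * valency c + 1)%N = d /\ valency c = n].
Proof.
case: Hval => [HE0 [Hedge [Hsig _]]].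
case: Hst => [HV [HE [Hs Hv]]].
have Hone : forall e : bE B, exists h, he h = e /\ hv h = c.
  by move=> e; have [h [h' [E _ Hh _]]] := Hs e; exists h.
have Huniq : forall h1 h2 : bH B, he h1 = he h2 -> hv h1 = c -> hv h2 = c -> h1 = h2.
  move=> h1 h2 E H1 H2; have [hc [hl [Ec El Hc Hl]]] := Hs (he h1).
  have N : hc != hl by apply/eqP => X; apply: Hl; rewrite -X.
  have Ecl : he hc = he hl by rewrite Ec El.
  have R : forall h, he h = he h1 -> hv h = c -> h = hc.
    move=> h Eh Hh; have [//|X] := fibre_two Hedge Ecl N (etrans Eh (esym Ec)).
    by case: Hl; rewrite -X.
  by rewrite (R h1) // (R h2).
have vc : valency c = n by rewrite (val_c Hone Huniq).
have Hmv : (mult c * valency c)%N = d.-1 by rewrite vc Hmc divnK.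
split => //.
- rewrite /tv vc Hmc; apply/negP => /andP [/eqP n1 /eqP].
  by rewrite n1 divn1; lia.
- by move=> a /eqP Na; rewrite /tv Hv // Hma.
- by rewrite Hmv; lia.
Qed.

Lemma not_special : special_A2 B = false.
Proof.
case: star_facts => ntc _ _ _ [_ vc].
case: Hst => [_ [HE _]].
apply/negP => /and3P [_ /eqP E1 /forallP Hm].
by move: ntc; rewrite /tv vc -HE E1 eqxx (eqP (Hm c)).
Qed.

Variables (K : fieldType) (q : bE B -> bV B -> K).

Lemma rev_hom : d_homogeneous (@Pres K (QBG B) (genBG q)) d.
Proof.
case: Hval => [HE0 [Hedge [Hsig _]]].
case: star_facts => ntc Hone Huniq Hleaf [Ld vc].
have Hm2 : (2 <= mult c * valency c)%N by lia.
exists (genBG q); split; last split => //=.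
- move=> g Hg; have [h' [Hc Hx]] := classify Hedge Hsig ntc Hone Huniq Hleaf Hm2 Hg.
  split.
    exists [:: (he h', lifta (cycseq h' (mult c * valency c + 1)))] => r Hr.
    have [h1 [Hc1 E]] := gen_pt Hedge Hsig ntc Hone Huniq Hleaf Hm2 Hg Hr.
    rewrite E inE /=; apply/andP; split; last first.
      by apply: wfp_cyc => //; rewrite (trunc_iff ntc Hleaf) Hc1 eqxx.
    have := Hr; rewrite Hx => /pathel_supp [E1 _]; rewrite E /= in E1.
    by rewrite (Huniq _ _ E1 Hc1 Hc) eqxx.
  move=> r Hr; rewrite -Ld; exact: (gen_len Hedge Hsig ntc Hone Huniq Hleaf Hm2 Hg Hr).
- move=> g0 Hg0; have [h0 [Hc0 Hx0]] := classify Hedge Hsig ntc Hone Huniq Hleaf Hm2 Hg0.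
  set L := (mult c * valency c + 1)%N in Hx0.
  have ntr0 : ~~ trunc h0 by rewrite (trunc_iff ntc Hleaf) Hc0 eqxx.
  set r0 : qpath (QBG B) := (he h0, lifta (cycseq h0 L)).
  have w0 : wfp r0.1 r0.2 by apply: wfp_cyc.
  have Hr0 : g0 r0 = 1%R by rewrite Hx0; apply: pathel_at; apply: all_cycseq.
  have sz0 : size r0.2 = L.
    by rewrite -(size_map val) map_val_lifta ?size_cycseq // all_cycseq.
  have [x [Hx Hxr]] := in_ideal_gen Hg0 w0.
  exists x; split => // Hin.
  have Z : x r0 = 0%R.
    apply: (ideal_point _ Hin) => g [Hg Nge]; split.
      apply/eqP; apply: contraT => Hgr.
      have [h1 [Hc1 Hx1]] := classify Hedge Hsig ntc Hone Huniq Hleaf Hm2 Hg.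
      move: Hgr; rewrite Hx1 => /pathel_supp [E1 _].
      have E' := Huniq _ _ E1 Hc0 Hc1; subst h1.
      by case: Nge => r; rewrite Hx1 Hx0.
    by move=> r' Hr'; rewrite (gen_len Hedge Hsig ntc Hone Huniq Hleaf Hm2 Hg Hr') sz0.
  by move: Z; rewrite Hxr Hr0 => /eqP; rewrite oner_eq0.
Qed.
End Rev.

End PartG.
Import PartG.

Module PartH.
Local Open Scope ring_scope.

Lemma in_ideal0 (K : fieldType) (Q : quiver) (G : kq K Q -> Prop) x :
  (forall r, x r = 0) -> in_ideal G x.
Proof.
move=> H; have f : 'I_0 -> qpath Q by case.
exists 0%N, f, f, (fun _ => 0), (fun _ => x).
split => [[] //|r]; by rewrite H big_ord0.
Qed.

Lemma in_ideal_ext (K : fieldType) (Q : quiver) (G : kq K Q -> Prop) x y :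
  x =1 y -> in_ideal G x -> in_ideal G y.
Proof.
move=> E [n [u [w [c [g [HG Hx]]]]]]; exists n, u, w, c, g; split => // r.
by rewrite -E Hx.
Qed.

Section Relabel.
Variables (K : fieldType) (Q1 Q2 : quiver).
Variables (al : qV Q2 -> qV Q1) (al' : qV Q1 -> qV Q2).
Variables (be : qA Q2 -> qA Q1) (be' : qA Q1 -> qA Q2).
Hypothesis alK : cancel al al'.
Hypothesis al'K : cancel al' al.
Hypothesis beK : cancel be be'.
Hypothesis be'K : cancel be' be.
Hypothesis Hs : forall a, qs (be a) = al (qs a).
Hypothesis Ht : forall a, qt (be a) = al (qt a).

Definition Rl (p : qpath Q2) : qpath Q1 := (al p.1, map be p.2).
Definition Rl' (p : qpath Q1) : qpath Q2 := (al' p.1, map be' p.2).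
Definition rl (f : kq K Q1) : kq K Q2 := fun r => f (Rl r).

Lemma RlK : cancel Rl Rl'.
Proof. by case=> v s; rewrite /Rl /Rl' /= alK mapK. Qed.
Lemma Rl'K : cancel Rl' Rl.
Proof. by case=> v s; rewrite /Rl /Rl' /= al'K mapK. Qed.

Lemma wfp_Rl v s : wfp (al v) (map be s) = wfp v s.
Proof.
elim: s v => [|a s IH] v; first by [].
rewrite [LHS]/= [RHS]/= Hs Ht IH; congr andb.
by apply/eqP/eqP => [/(can_inj alK)|->].
Qed.

Lemma tgtp_Rl v s : tgtp (al v) (map be s) = al (tgtp v s).
Proof.
elim: s v => [|a s IH] v; first by [].
have -> : tgtp (al v) (map be (a :: s)) = tgtp (qt (be a)) (map be s) by [].
by rewrite Ht IH.
Qed.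

Lemma rl_kmul f g r : rl (kmul f g) r = kmul (rl f) (rl g) r.
Proof.
case: r => v s; rewrite /rl /kmul /Rl /= wfp_Rl; case: ifP => // _.
rewrite size_map; apply: eq_bigr => i _.
by rewrite -map_take -map_drop tgtp_Rl.
Qed.

Lemma rl_kmulE f g : rl (kmul f g) = kmul (rl f) (rl g).
Proof. apply: functional_extensionality => r; exact: rl_kmul. Qed.

Lemma rl_pbasis p : rl (pbasis K p) = pbasis K (Rl' p).
Proof.
apply: functional_extensionality => r; rewrite /rl /pbasis.
congr ((_ : bool)%:R); apply/eqP/eqP => [<-|->]; by rewrite ?RlK ?Rl'K.
Qed.

Lemma rl_kone r : rl (@kone K Q1) r = @kone K Q2 r.
Proof. by rewrite /rl /kone /=; case: r => v [|a s]. Qed.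

Lemma rl_kfin f : kfin f -> kfin (rl f).
Proof.
case=> s Hs'; exists (map Rl' s) => r Hr.
have /andP [H1 H2] := Hs' _ Hr.
apply/andP; split; last by move: H2; rewrite /= wfp_Rl.
by rewrite -(RlK r) map_f.
Qed.

Lemma rl_ideal (G1 : kq K Q1 -> Prop) (G2 : kq K Q2 -> Prop) x :
  (forall g, G1 g -> G2 (rl g)) -> in_ideal G1 x -> in_ideal G2 (rl x).
Proof.
move=> HG [n [u [w [c [g [HG1 Hx]]]]]].
exists n, (fun i => Rl' (u i)), (fun i => Rl' (w i)), c, (fun i => rl (g i)).
split => [i|r]; first exact: HG.
rewrite {1}/rl Hx; apply: eq_bigr => i _; congr (_ * _).
by rewrite -!rl_pbasis -rl_kmulE -rl_kmul.
Qed.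
End Relabel.

End PartH.
Import PartH.

Module PartI.

Section Iso.
Variables (B : brauer_graph) (d n : nat) (c : bV B).
Hypothesis Hval : bg_valid B.
Hypothesis Hd : (3 <= d)%N.
Hypothesis Hn : (0 < n)%N.
Hypothesis Hst : is_star n c.
Hypothesis Hdiv : (n %| d.-1)%N.
Hypothesis Hmc : mult c = (d.-1 %/ n)%N.
Hypothesis Hma : forall a, a <> c -> mult a = 1%N.
Variables (K : fieldType) (q : bE B -> bV B -> K).
Local Notation sig := (bsigma B).

Lemma gen_pb g : genBG q g ->
  exists r : qpath (QBG B), [/\ wfp r.1 r.2, size r.2 = d & g = pbasis K r].
Proof.
case: (Hval) => [HE0 [Hedge [Hsig [Hfc _]]]].
case: (star_facts Hval Hd Hn Hst Hdiv Hmc Hma) => ntc Hone Huniq Hleaf [Ld vc].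
have Hm2 : (2 <= mult c * valency c)%N by lia.
move=> Hg; have [h' [Hc Hx]] := classify Hedge Hsig ntc Hone Huniq Hleaf Hm2 Hg.
have ntr : ~~ trunc h' by rewrite (trunc_iff ntc Hleaf) Hc eqxx.
exists (he h', lifta (cycseq h' (mult c * valency c + 1))); split.
- exact: wfp_cyc.
- by rewrite -(size_map val) map_val_lifta ?size_cycseq // all_cycseq.
apply: functional_extensionality => r; rewrite Hx /pbasis.
case: eqP => [->|N]; first by rewrite pathel_at // all_cycseq.
apply/eqP; apply: contraT => /pathel_pt H; case: N; apply: H; exact: all_cycseq.
Qed.

Lemma iso : alg_iso (@Pres K (QBG B) (genBG q)) (nakayama K n d).
Proof.
case: (Hval) => [HE0 [Hedge [Hsig [Hfc _]]]].
case: (star_facts Hval Hd Hn Hst Hdiv Hmc Hma) => ntc Hone Huniq Hleaf [Ld vc].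
have Hm2 : (2 <= mult c * valency c)%N by lia.
have HEn : #|bE B| = n by case: Hst => _ [].
have [e0 _] := card_gt0P HE0.
have [h0 [_ Hc0]] := Hone e0.
pose io (i : nat) := iter i sig h0.
have hv_io : forall i, hv (io i) = c.
  by elim=> [|i IH] //; rewrite /io iterS Hsig.
have fc_iff : forall h, fconnect sig h0 h = (hv h == c).
  move=> h; apply/idP/eqP => [/iter_findex <-|Hh]; first exact: hv_io.
  by apply: Hfc; rewrite Hc0 Hh.
have ordn : fingraph.order sig h0 = n.
  by rewrite /fingraph.order -vc /valency; apply: eq_card => h; rewrite !inE fc_iff.
have iter_n : iter n sig h0 = h0 by rewrite -{1}ordn iter_order //; exact: perm_inj.
have ntr : forall i, ~~ trunc (io i) by move=> i; rewrite (trunc_iff ntc Hleaf) hv_io eqxx.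
pose al (i : 'I_n) : bE B := he (io i).
pose be (i : 'I_n) : arrowBG B := Sub (io i) (ntr i).
have Fio : forall i : 'I_n, findex sig h0 (io i) = i.
  by move=> i; apply: findex_iter; rewrite ordn.
have io_inj : forall i j : 'I_n, io i = io j -> i = j.
  by move=> i j E; apply: val_inj; rewrite /= -Fio -[val j]Fio E.
have al_inj : injective al.
  move=> i j E; apply: io_inj; exact: Huniq E (hv_io _) (hv_io _).
have [al' alK al'K] : bijective al by apply: inj_card_bij => //; rewrite HEn card_ord.
have lt : forall a : arrowBG B, (findex sig h0 (val a) < n)%N.
  by move=> a; rewrite -ordn; apply: findex_max; rewrite fc_iff (arrow_c ntc Hleaf a) eqxx.
pose be' (a : arrowBG B) : 'I_n := Ordinal (lt a).
have beK : cancel be be' by move=> i; apply: val_inj => /=; apply: Fio.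
have be'K : cancel be' be.
  move=> a; apply: val_inj => /=; apply: iter_findex.
  by rewrite fc_iff (arrow_c ntc Hleaf a) eqxx.
have sig_io : forall i : 'I_n, sig (io i) = io (ordS i).
  move=> i; rewrite /io -iterS /=.
  case: (ltngtP i.+1 n) => [lt1|gt1|eq1]; first by rewrite modn_small.
    by move: (ltn_ord i); lia.
  by rewrite -iterS eq1 modnn iter_n.
have Hs : forall i : 'I_n, @qs (QBG B) (be i) = al (@qs (cycQ n) i) by [].
have Ht : forall i : 'I_n, @qt (QBG B) (be i) = al (@qt (cycQ n) i).
  by move=> i; rewrite /= sig_io.
have io_be' : forall a, io (be' a) = val a.
  by move=> a; rewrite -[RHS](congr1 val (be'K a)).
have Hs2 : forall a, @qs (cycQ n) (be' a) = al' (@qs (QBG B) a).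
  by move=> a; rewrite /= -[be' a]alK /al io_be'.
have Ht2 : forall a, @qt (cycQ n) (be' a) = al' (@qt (QBG B) a).
  by move=> a; rewrite /= -[ordS (be' a)]alK /al -sig_io io_be'.
have cyc_path : forall (s : seq 'I_n) (v : 'I_n), @wfp (cycQ n) v s ->
    map (fun i => val (be i)) s = cycseq (io v) (size s).
  elim=> [|a s IH] v //= /andP [/eqP Ea Hw]; subst a.
  by rewrite cycseqS sig_io (IH _ Hw).
exists (@rl K (QBG B) (cycQ n) al be).
split; first by move=> x y E r; apply: E.
split; first by move=> x Hx; apply: (@rl_kfin K (QBG B) (cycQ n) al al' be be' alK beK Hs Ht x Hx).
split; first by [].
split.
  by move=> x y _ _; apply: in_ideal0 => r; rewrite /ksub (@rl_kmul K (QBG B) (cycQ n) al al' be alK Hs Ht) subrr.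
split.
  by apply: in_ideal0 => r; rewrite /ksub (@rl_kone K (QBG B) (cycQ n) al be) subrr.
split.
  move=> x Hx; split => HI.
  - apply: (@in_ideal_ext _ _ _ (@rl K (cycQ n) (QBG B) al' be' (@rl K (QBG B) (cycQ n) al be x))).
      by move=> r; rewrite /rl (@Rl'K (QBG B) (cycQ n) al al' be be' al'K be'K).
    apply: (@rl_ideal K (cycQ n) (QBG B) al' al be' be al'K alK be'K beK Hs2 Ht2 _ _ _ _ HI) => g [p [wp sp Eg]].
    have -> : @rl K (cycQ n) (QBG B) al' be' g = pbasis K (@Rl (QBG B) (cycQ n) al be p).
      rewrite -(@rl_pbasis K (cycQ n) (QBG B) al' al be' be al'K alK be'K beK).
      by apply: functional_extensionality => r; rewrite /rl Eg.
    have -> : pbasis K (@Rl (QBG B) (cycQ n) al be p) =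
        pathel K (he (io p.1)) (cycseq (io p.1) (mult c * valency c + 1)).
      apply: functional_extensionality => r; rewrite /pbasis /pathel /Rl.
      rewrite Ld -sp -(cyc_path _ _ wp).
      have -> : map (fun i => val (be i)) p.2 = map val (map be p.2) by rewrite -map_comp.
      by case: r => u v; rewrite xpair_eqE (inj_eq (inj_map val_inj)).
    by apply: (gen_ex Hedge ntc Huniq Hleaf q); exact: hv_io.
  - apply: (@rl_ideal K (QBG B) (cycQ n) al al' be be' alK al'K beK be'K Hs Ht _ _ _ _ HI) => g Hg.
    have [r [wr sr ->]] := gen_pb Hg.
    rewrite (@rl_pbasis K (QBG B) (cycQ n) al al' be be' alK al'K beK be'K).
    eexists; split; last by [].
      by rewrite /= (@wfp_Rl (cycQ n) (QBG B) al' al be' al'K Hs2 Ht2).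
    by rewrite /= size_map.
move=> y Hy; exists (@rl K (cycQ n) (QBG B) al' be' y); split; first exact: (@rl_kfin K (cycQ n) (QBG B) al' al be' be al'K be'K Hs2 Ht2 y Hy).
apply: in_ideal0 => r; rewrite /ksub /rl.
by move: (@RlK (QBG B) (cycQ n) al al' be be' alK beK r); rewrite /Rl' /Rl /= => ->; rewrite subrr.
Qed.
End Iso.

End PartI.
Import PartI.


Lemma loop_not_hom (K : fieldType) (d : nat) : (3 <= d)%N ->
  ~ d_homogeneous (loop_pres K) d.
Proof.
move=> Hd [G [HGd [HI _]]].
pose r : qpath loopQ := (tt, [:: tt; tt]).
have Hg : pG (loop_pres K) (pbasis K r) by [].
have [y [Hy Hyr]] := in_ideal_gen Hg (isT : wfp r.1 r.2).
have /HI HyG := Hy.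
have Hm : (d <= size r.2)%N.
  apply: (@ideal_minlen _ _ G d y r) => //; last by rewrite Hyr /pbasis eqxx oner_neq0.
  by move=> g Gg r' Hr'; have [_ Hh] := HGd g Gg; rewrite (Hh _ Hr').
by move: Hm; rewrite leqNgt (leq_trans _ Hd).
Qed.

Theorem proposition2p3 (K : fieldType) (B : brauer_graph)
    (q : bE B -> bV B -> K) (d : nat) :
  bg_valid B -> quant_valid q -> (3 <= d)%N ->
  (d_homogeneous (BGpres q) d <->
     exists (n : nat) (c : bV B),
       [/\ (0 < n)%N, is_star n c, (n %| d.-1)%N, mult c = (d.-1 %/ n)%N &
           forall a, a <> c -> mult a = 1%N]) /\
  (forall (n : nat) (c : bV B),
       (0 < n)%N -> is_star n c -> (n %| d.-1)%N -> mult c = (d.-1 %/ n)%N ->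
       (forall a, a <> c -> mult a = 1%N) ->
     alg_iso (BGpres q) (nakayama K n d)).
Proof.
move=> Hval _ Hd; split; first split.
- case Hs: (special_A2 B) => Hdh.
    by exfalso; move: Hdh; rewrite /BGpres Hs; apply: loop_not_hom.
  move: Hdh; rewrite /BGpres Hs => [[G [HGd [HI _]]]].
  exact: (fwd Hval Hd HGd HI Hs).
- move=> [n [c [Hn Hst Hdiv Hmc Hma]]].
  rewrite /BGpres (not_special Hval Hd Hn Hst Hdiv Hmc Hma).
  exact: (rev_hom Hval Hd Hn Hst Hdiv Hmc Hma q).
- move=> n c Hn Hst Hdiv Hmc Hma.
  rewrite /BGpres (not_special Hval Hd Hn Hst Hdiv Hmc Hma).
  exact: (iso Hval Hd Hn Hst Hdiv Hmc Hma q).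
Qed.
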